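(* Let $\varrho,\sigma$ be density operators on a finite-dimensional Hilbert space $\mathcal H$ and $\alpha\in(0,1)$. Then \[ \limsup_{n\to\infty}\frac1nD_\alpha^{\mathrm{test}}(\varrho^{\otimes n}\|\sigma^{\otimes n})=\limsup_{n\to\infty}-\frac1n\log\min_{0\le T\le I}\Big\{\big(\operatorname{Tr}\varrho^{\otimes n}(I-T)\big)^{\frac{\alpha}{1-\alpha}}+\operatorname{Tr}\sigma^{\otimes n}T\Big\}, \] and the same equality holds with $\liminf$ in place of $\limsup$ on both sides (the minima being over operators $T$ on $\mathcal H^{\otimes n}$ with $0\le T\le I$). In particular, the limit on the left exists if and only if the limit on the right exists, in which case they are equal.
   Context: For probability vectors $p,q$ and $\alpha\in(0,1)$, $D_\alpha(p\|q)=\frac{1}{\alpha-1}\log\sum_x p(x)^\alpha q(x)^{1-\alpha}$. A test is an operator $0\le T\le I$; $\mathcal T(X):=(\operatorname{Tr}XT,\operatorname{Tr}X(I-T))$; $D_\alpha^{\mathrm{test}}(\varrho\|\sigma):=\max_{0\le T\le I}D_\alpha(\mathcal T(\varrho)\|\mathcal T(\sigma))$. *)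

(* Defs.v *)
From HB Require Import structures.
From mathcomp Require Import all_boot all_order all_algebra.
From mathcomp Require Import complex mxtens.
From mathcomp Require Import all_classical all_reals all_analysis.
Set Implicit Arguments. Unset Strict Implicit. Unset Printing Implicit Defensive.
Import Order.TTheory GRing.Theory Num.Theory.
Local Open Scope ring_scope.
Local Open Scope complex_scope.

Section QDefs.
Variable R : realType.
Local Notation C := R[i].

Definition adjmx {m n} (A : 'M[C]_(m, n)) : 'M[C]_(n, m) :=
  \matrix_(i, j) (A j i)^*.

(* positive semidefinite: <v, A v> >= 0 for all v (in the order of C,
   which forces the value to be real) *)
Definition psd {d} (A : 'M[C]_d) : Prop :=
  forall v : 'cV[C]_d, 0 <= (adjmx v *m A *m v) 0 0.

Definition density {d} (rho : 'M[C]_d) : Prop := psd rho /\ \tr rho = 1.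

Definition is_test {d} (T : 'M[C]_d) : Prop := psd T /\ psd (1%:M - T).

Definition trR {d} (A : 'M[C]_d) : R := complex.Re (\tr A).

Definition elog (x : R) : \bar R := if 0 < x then (ln x)%:E else -oo%E.

(* Renyi divergence of two probability vectors on a two-point set,
   D_alpha(p||q) = 1/(alpha-1) log sum_x p(x)^alpha q(x)^(1-alpha),
   with value +oo when the sum vanishes. *)
Definition renyi2 (alpha p1 p2 q1 q2 : R) : \bar R :=
  (((alpha - 1)^-1)%:E *
   elog (p1 `^ alpha * q1 `^ (1 - alpha) + p2 `^ alpha * q2 `^ (1 - alpha)))%E.

(* D_alpha( T(rho) || T(sigma) ) for the binary measurement of a test T *)
Definition renyi_T (alpha : R) {d} (rho sigma T : 'M[C]_d) : \bar R :=
  renyi2 alpha (trR (rho *m T)) (trR (rho *m (1%:M - T)))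
               (trR (sigma *m T)) (trR (sigma *m (1%:M - T))).

(* measured (test) Renyi divergence: max over tests (the max is attained,
   so it equals the supremum) *)
Definition Dtest (alpha : R) {d} (rho sigma : 'M[C]_d) : \bar R :=
  ereal_sup [set renyi_T alpha rho sigma T | T in [set T | is_test T]].

(* min over tests of (Tr rho (I-T))^(alpha/(1-alpha)) + Tr sigma T
   (attained, hence equal to the infimum) *)
Definition errmin (alpha : R) {d} (rho sigma : 'M[C]_d) : R :=
  inf [set (trR (rho *m (1%:M - T))) `^ (alpha / (1 - alpha))
            + trR (sigma *m T) | T in [set T | is_test T]].

Definition tpow {d} (A : 'M[C]_d) (n : nat) : 'M[C]_(d ^ n) := ntensmx A n.

Definition lhs_seq (alpha : R) {d} (rho sigma : 'M[C]_d) (n : nat) : \bar R :=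
  ((n%:R^-1)%:E * Dtest alpha (tpow rho n) (tpow sigma n))%E.

Definition rhs_seq (alpha : R) {d} (rho sigma : 'M[C]_d) (n : nat) : \bar R :=
  (- ((n%:R^-1)%:E * elog (errmin alpha (tpow rho n) (tpow sigma n))))%E.

End QDefs.

(* Main.v *)
Require Import Defs.
From HB Require Import structures.
From mathcomp Require Import all_boot all_order all_algebra.
From mathcomp Require Import complex mxtens.
From mathcomp Require Import all_classical all_reals all_analysis.
From mathcomp Require Import ring lra.
Import Order.TTheory GRing.Theory Num.Theory.
Local Open Scope ring_scope.
Module SubA.
Local Open Scope ring_scope.

Section RealCore.
Variable R : realType.
Implicit Types (x y p q e : R).

Lemma pw_le1 x e : 0 <= x <= 1 -> 0 <= e -> x `^ e <= 1.
Proof.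
move=> /andP[x0 x1] e0.
have := @ge0_ler_powR R e e0 x 1; rewrite powR1 => ->//.
by rewrite nnegrE.
Qed.

Lemma pw_mono x y e : 0 <= e -> 0 <= x -> x <= y -> x `^ e <= y `^ e.
Proof.
move=> e0 x0 xy; apply: (@ge0_ler_powR R e e0) => //; rewrite nnegrE//.
exact: le_trans xy.
Qed.

Lemma pw_half e : e <= 1 -> 2^-1 <= (2^-1 : R) `^ e.
Proof. by move=> e1; apply: ger1_powR => //; apply/andP; split; lra. Qed.

Lemma pw_two e : e <= 1 -> (2 : R) `^ e <= 2.
Proof. by move=> e1; apply: ler1_powR => //; lra. Qed.

Lemma pw_subadd x y e : 0 <= e -> e <= 1 -> 0 <= x -> 0 <= y ->
  (x + y) `^ e <= 2 * (x `^ e + y `^ e).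
Proof.
move=> e0 e1 x0 y0.
have hx := powR_ge0 x e; have hy := powR_ge0 y e.
have h2 := pw_two _ e1.
wlog xy : x y x0 y0 hx hy / x <= y.
  move=> H; case: (leP x y) => [xy|/ltW yx]; first exact: H.
  by rewrite addrC [_ `^ e + _]addrC; apply: H.
have : (x + y) `^ e <= (2 * y) `^ e by apply: pw_mono => //; lra.
have h20 : (0:R) <= 2 by lra.
rewrite powRM //.
move=> h; apply: (le_trans h); nra.
Qed.

Variable alpha : R.
Hypothesis a0 : 0 < alpha.
Hypothesis a1 : alpha < 1.
Local Notation be := (1 - alpha).
Local Notation k := (alpha / (1 - alpha)).

Lemma kbe : k * be = alpha.
Proof.
have A0 := a0; have A1 := a1. have h : 1 - alpha != 0 by rewrite subr_eq0 gt_eqF.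
by rewrite mulrVK // unitfE. Qed.

Definition Qf p q := (1 - p) `^ alpha * q `^ be + p `^ alpha * (1 - q) `^ be.
Definition Ef p q := p `^ k + q.

Lemma pa_eq p : p `^ alpha = (p `^ k) `^ be.
Proof.
have A0 := a0; have A1 := a1. by rewrite -powRrM kbe. Qed.

Lemma k_ge0 : 0 <= k.
Proof.
have A0 := a0; have A1 := a1. apply: divr_ge0. all: lra. Qed.

Lemma Q_upper p q : 0 <= p <= 1 -> 0 <= q <= 1 -> Qf p q <= 2 * (Ef p q) `^ be.
Proof.
have A0 := a0; have A1 := a1.
move=> /andP[p0 p1] /andP[q0 q1].
have hb0 : 0 <= be by lra.
have u1 : (1 - p) `^ alpha <= 1 by apply: pw_le1; [apply/andP; split|]; lra.
have u2 : (1 - q) `^ be <= 1 by apply: pw_le1; [apply/andP; split|]; lra.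
have pk0 := powR_ge0 p k.
have e1 : q `^ be <= (Ef p q) `^ be by apply: pw_mono => //; rewrite /Ef; lra.
have e2 : p `^ alpha <= (Ef p q) `^ be by rewrite pa_eq; apply: pw_mono => //; rewrite /Ef; lra.
have := powR_ge0 q be; have := powR_ge0 p alpha.
have := powR_ge0 (1 - p) alpha; have := powR_ge0 (1 - q) be.
rewrite /Qf; nra.
Qed.

Lemma Q_lower p q : 0 <= p <= 1 -> 0 <= q <= 2^-1 -> (Ef p q) `^ be / 8 <= Qf p q.
Proof.
have A0 := a0; have A1 := a1.
move=> /andP[p0 p1] /andP[q0 q1].
have hb0 : 0 <= be by lra.
have hb1 : be <= 1 by lra.
have pk0 := powR_ge0 p k.
have pk1 : p `^ k <= 1 by apply: pw_le1 => //; [apply/andP; split|exact: k_ge0].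
have hq : 2^-1 <= (1 - q) `^ be.
  apply: le_trans (pw_half _ hb1) _; apply: pw_mono => //; lra.
have g1 := powR_ge0 (1 - p) alpha; have g2 := powR_ge0 q be.
have g3 := powR_ge0 p alpha; have g4 := powR_ge0 (1 - q) be.
case: (leP p (2^-1)) => hp.
- have hp' : 2^-1 <= (1 - p) `^ alpha.
    apply: le_trans (pw_half _ (ltW a1)) _; apply: pw_mono => //; lra.
  have := pw_subadd _ _ _ hb0 hb1 pk0 q0; rewrite -pa_eq /Ef => h.
  rewrite /Qf; nra.
- have hp' : 2^-1 <= p `^ alpha.
    apply: le_trans (pw_half _ (ltW a1)) _; apply: pw_mono => //; lra.
  have : (Ef p q) `^ be <= 2 `^ be by apply: pw_mono => //; rewrite /Ef; lra.
  have := pw_two _ hb1.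
  rewrite /Qf; nra.
Qed.

End RealCore.
Arguments Qf {R}.
Arguments Ef {R}.
Arguments Q_lower {R alpha}.
Arguments Q_upper {R alpha}.
Arguments pw_mono {R}.

End SubA.
Import SubA.

Module SubC.
Local Open Scope ring_scope.
Local Open Scope classical_set_scope.

Section Abstract.
Variable R : realType.
Variable alpha : R.
Variables (X : Type) (t : set X) (P2 Q1 : X -> R) (f : X -> X).

Local Notation be := (1 - alpha).
Local Notation k := (alpha / (1 - alpha)).

Definition rT x := renyi2 alpha (1 - P2 x) (P2 x) (Q1 x) (1 - Q1 x).
Definition Dt := ereal_sup [set rT x | x in t].
Definition Sm := [set (P2 x) `^ k + Q1 x | x in t].
Definition mm := inf Sm.

Lemma rT_eq x : rT x = (((alpha - 1)^-1)%:E * elog (Qf alpha (P2 x) (Q1 x)))%E.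
Proof. by rewrite /rT /renyi2 /Qf [_ * (1 - _) `^ _]mulrC. Qed.

Lemma rT_pos (a0 : 0 < alpha) (a1 : alpha < 1) x : 0 < Qf alpha (P2 x) (Q1 x) ->
  rT x = (- (be^-1 * ln (Qf alpha (P2 x) (Q1 x))))%:E.
Proof.
move=> h; rewrite rT_eq /elog h -EFinM; congr (_%:E).
have -> : alpha - 1 = - (1 - alpha) by ring.
by rewrite invrN mulNr.
Qed.

Lemma rT_zero (a0 : 0 < alpha) (a1 : alpha < 1) x : Qf alpha (P2 x) (Q1 x) <= 0 ->
  rT x = +oo%E.
Proof.
move=> h; rewrite rT_eq /elog ltNge h /=.
apply: lt0_muleNy; rewrite lte_fin invr_lt0; lra.
Qed.

Hypothesis ht : forall x, t x -> (0 <= P2 x <= 1) /\ (0 <= Q1 x <= 1).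
Hypothesis hf : forall x, t x -> [/\ t (f x), P2 (f x) = 1 - P2 x & Q1 (f x) = 1 - Q1 x].
Variable x0 : X.
Hypothesis tx0 : t x0.

Lemma Sm_lb : lbound Sm 0.
Proof.
move=> _ [x tx <-]; have [_ /andP[q0 _]] := ht _ tx.
have := powR_ge0 (P2 x) k; lra.
Qed.

Lemma Sm_inf : has_inf Sm.
Proof. by split; [exists (P2 x0 `^ k + Q1 x0); exists x0|exists 0; exact: Sm_lb]. Qed.

Lemma mm_ge0 : 0 <= mm.
Proof. apply: lb_le_inf; [by exists (P2 x0 `^ k + Q1 x0); exists x0|exact: Sm_lb]. Qed.

Lemma mm_le x : t x -> mm <= P2 x `^ k + Q1 x.
Proof. move=> tx; apply: (ge_inf (proj2 Sm_inf)); by exists x. Qed.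

Lemma Qf_sym p q : Qf alpha (1 - p) (1 - q) = Qf alpha p q.
Proof. have e : forall z : R, 1 - (1 - z) = z by move=> z; ring.
by rewrite /Qf !e addrC. Qed.

Lemma Q_lower_m (a0 : 0 < alpha) (a1 : alpha < 1) x : t x ->
  mm `^ be / 8 <= Qf alpha (P2 x) (Q1 x).
Proof.
move=> tx; have [/andP[p0 p1] /andP[q0 q1]] := ht _ tx.
have hb0 : 0 <= be by lra.
have m0 := mm_ge0.
case: (leP (Q1 x) (2^-1)) => hq.
- have hL := Q_lower a0 a1 (P2 x) (Q1 x) (ltac:(by apply/andP)) (ltac:(apply/andP; split; lra)).
  apply: le_trans hL.
  rewrite ler_pM2r; last by lra.
  by apply: pw_mono => //; exact: mm_le.
- have [tfx hP hQ] := hf _ tx.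
  rewrite -Qf_sym -hP -hQ.
  have [/andP[p0' p1'] /andP[q0' q1']] := ht _ tfx.
  have hL := Q_lower a0 a1 (P2 (f x)) (Q1 (f x)) (ltac:(by apply/andP)) (ltac:(apply/andP; split; lra)).
  apply: le_trans hL.
  rewrite ler_pM2r; last by lra.
  by apply: pw_mono => //; exact: mm_le.
Qed.

Lemma Dt_upper (a0 : 0 < alpha) (a1 : alpha < 1) :
  (Dt <= - elog mm + (ln 8 / be)%:E)%E.
Proof.
have m0 := mm_ge0.
move: m0; rewrite le_eqVlt => /orP[/eqP <-|mpos].
  by rewrite /elog ltxx /= leey.
apply/ereal_supP => _ [x tx <-].
have hQ := Q_lower_m a0 a1 _ tx.
have hmb : 0 < mm `^ be / 8 by apply: divr_gt0 => //; apply: powR_gt0.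
have Qpos : 0 < Qf alpha (P2 x) (Q1 x) by lra.
rewrite rT_pos // /elog mpos -EFinN -EFinD lee_fin.
have hl : ln (mm `^ be / 8) <= ln (Qf alpha (P2 x) (Q1 x)).
  by rewrite ler_ln // posrE.
have e1 : ln (mm `^ be / 8) = be * ln mm - ln 8.
  rewrite lnM ?posrE; last 2 first.
  - by apply: powR_gt0.
  - by rewrite invr_gt0.
  by rewrite lnV ?posrE // ln_powR.
rewrite e1 in hl.
have ib0 : 0 <= be^-1 by rewrite invr_ge0; lra.
have h := ler_wpM2l ib0 hl.
rewrite mulrDr mulrA mulVf ?mul1r in h; last by apply/eqP; lra.
rewrite mulrC; move: h; set L := ln _; set M := ln mm; set c := ln 8. 
rewrite mulrN; lra.
Qed.

Lemma Dt_ge_y (a0 : 0 < alpha) (a1 : alpha < 1) y : 0 < y -> mm < y ->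
  ((- (ln 2 / be) - ln y)%:E <= Dt)%E.
Proof.
move=> y0 my.
have hy : 0 < y - mm by lra.
have [e [x tx <-] he] := inf_adherent hy Sm_inf.
rewrite -/mm in he.
have hlt : P2 x `^ k + Q1 x < y by lra.
have [/andP[p0 p1] /andP[q0 q1]] := ht _ tx.
case: (leP (Qf alpha (P2 x) (Q1 x)) 0) => hQ.
  apply: le_trans (leey _) _; apply: le_ereal_sup_tmp.
  by exists (rT x) => //; [exists x | rewrite rT_zero].
apply: le_ereal_sup_tmp; exists (rT x); first by exists x.
rewrite rT_pos // lee_fin.
have hU := Q_upper a0 a1 (P2 x) (Q1 x) (ltac:(apply/andP; split; lra)) (ltac:(apply/andP; split; lra)).
rewrite /Ef in hU.
have E0 : 0 < P2 x `^ k + Q1 x.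
  have Eg : 0 <= P2 x `^ k + Q1 x by have := powR_ge0 (P2 x) k; lra.
  move: Eg; rewrite le_eqVlt => /orP[/eqP hh|//].
  have bne : be != 0 by rewrite subr_eq0 gt_eqF.
  by exfalso; move: hU; rewrite -hh powR0 // mulr0; lra.
have hl : ln (Qf alpha (P2 x) (Q1 x)) <= ln (2 * y `^ be).
  rewrite ler_ln ?posrE //; last by apply: mulr_gt0 => //; apply: powR_gt0.
  apply: le_trans hU _; rewrite ler_pM2l; last by lra.
  by apply: pw_mono; lra.
have e1 : ln (2 * y `^ be) = ln 2 + be * ln y.
  by rewrite lnM ?posrE ?ln_powR //; apply: powR_gt0.
rewrite e1 in hl.
have ib0 : 0 <= be^-1 by rewrite invr_ge0; lra.
have h := ler_wpM2l ib0 hl.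
rewrite mulrDr mulrA mulVf ?mul1r in h; last by apply/eqP; lra.
move: h; rewrite mulrC; set L := ln _; set M := ln y; set c := ln 2.
move=> h; rewrite [c / _]mulrC; lra.
Qed.

Lemma Dt_lower (a0 : 0 < alpha) (a1 : alpha < 1) :
  (- elog mm <= Dt + (ln 2 / be + ln 2)%:E)%E.
Proof.
have m0 := mm_ge0.
move: m0; rewrite le_eqVlt => /orP[/eqP m00|mpos].
- suff -> : Dt = +oo%E by rewrite leey.
  have H : forall M : R, (M%:E <= Dt)%E.
    move=> M; have := @Dt_ge_y a0 a1 (expR (- (M + ln 2 / be))) (expR_gt0 _).
    rewrite -m00 expR_gt0 expRK => /(_ isT).
    by move=> h; apply: le_trans h; rewrite lee_fin; lra.
  move: H; case: Dt => [r||] // H.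
  + by have := H (r + 1)%R; rewrite lee_fin => hh; exfalso; lra.
  + by have := H 0.
have := @Dt_ge_y a0 a1 (2 * mm) (ltac:(lra)) (ltac:(lra)).
have e2 : ln (2 * mm) = ln 2 + ln mm by rewrite lnM ?posrE.
rewrite e2 /elog mpos.
move: Dt => [r||] //; rewrite ?lee_fin ?leey //.
move=> h; lra.
Qed.

End Abstract.

End SubC.
Import SubC.

Module SubD.
Local Open Scope ring_scope.
Local Open Scope classical_set_scope.

Section LimSup.
Variable R : realType.
Local Open Scope ereal_scope.
Implicit Types (u v : (\bar R)^nat).

Lemma limn_esup_mono u v N : (forall n, (N <= n)%N -> u n <= v n) ->
  limn_esup u <= limn_esup v.
Proof.
move=> H; rewrite !limn_esup_lim; apply: lee_lim; [exact: is_cvg_esups|exact: is_cvg_esups|].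
exists N => // n /= hn.
apply/ereal_supP => _ [k /= hk <-]; apply: le_trans (H k (leq_trans hn hk)) _.
by apply: ereal_sup_ubound; exists k.
Qed.

Lemma neg_shift (x y : \bar R) (e : R) : (x <= y + e%:E) = (- y <= - x + e%:E).
Proof. by rewrite leeNl fin_num_oppeD // oppeK leeBlDr. Qed.

Lemma limn_esup_shift u v N (e : R) : (forall n, (N <= n)%N -> u n <= v n + e%:E) ->
  limn_esup u <= limn_esup v + e%:E.
Proof.
move=> H.
have -> : limn_esup v + e%:E = limn_esup (fun n => v n + e%:E).
  have E1 : forall w : (\bar R)^nat, limn_esup w = - limn_einf (fun n => - w n).
    move=> w; rewrite /limn_einf oppeK; congr limn_esup; apply/funext => n /=.
    by rewrite oppeK.
  rewrite (E1 v) (E1 (fun n => v n + e%:E)).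
  have -> : (fun n => - (v n + e%:E)) = (fun n => (- e)%:E + - v n).
    by apply/funext => n; rewrite fin_num_oppeD // addeC.
  by rewrite limn_einf_shift // oppeD // EFinN oppeK addeC oppeK.
exact: (limn_esup_mono _ _ _ H).
Qed.

Lemma limn_einf_shift' u v N (e : R) : (forall n, (N <= n)%N -> u n <= v n + e%:E) ->
  limn_einf u <= limn_einf v + e%:E.
Proof.
move=> H; rewrite /limn_einf -neg_shift; apply: (@limn_esup_shift _ _ N) => n hn.
by rewrite -neg_shift; apply: H.
Qed.

Lemma lim_compare u v (c : R) : (0 <= c)%R ->
  (forall n, (0 < n)%N -> u n <= v n + (c / n%:R)%:E) ->
  limn_esup u <= limn_esup v /\ limn_einf u <= limn_einf v.
Proof.
move=> c0 H.
have key : forall e : R, (0 < e)%R -> exists N, forall n, (N <= n)%N -> u n <= v n + e%:E.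
  move=> e e0; exists (Num.truncn (c / e)).+1 => n hn.
  apply: le_trans (H n (leq_trans (ltn0Sn _) hn)) _; apply: leeD => //; rewrite lee_fin.
  have hN := truncnS_gt (c / e).
  have hn' : ((Num.truncn (c / e)).+1%:R <= n%:R :> R)%R by rewrite ler_nat.
  have n0 : (0 < n%:R :> R)%R by rewrite ltr0n (leq_trans (ltn0Sn _) hn).
  have : (c / e < n%:R)%R by apply: lt_le_trans hN hn'.
  rewrite ltr_pdivrMr // => h.
  rewrite ler_pdivrMr //; rewrite mulrC; exact: ltW.
have [H1 H2] : limn_esup u <= limn_esup v /\ limn_einf u <= limn_einf v.
  split.
  - apply/lee_addgt0Pr => e e0; have [N HN] := key e e0.
    exact: (limn_esup_shift _ _ _ _ HN).
  - apply/lee_addgt0Pr => e e0; have [N HN] := key e e0.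
    exact: (limn_einf_shift' _ _ _ _ HN).
by [].
Qed.
End LimSup.

End SubD.
Import SubD.

Module SubE.
Local Open Scope ring_scope.

Section Mx.
Variable R : realType.
Local Notation C := R[i].

Lemma Re_ge0 (z : C) : 0 <= z -> 0 <= complex.Re z.
Proof. by case: z => a b /andP[_ h]. Qed.

Lemma ReD (z w : C) : complex.Re (z + w) = complex.Re z + complex.Re w.
Proof. by case: z; case: w. Qed.

Lemma adjmxE m n (A : 'M[C]_(m, n)) : adjmx A = map_mx Num.conj A^T.
Proof. by apply/matrixP => i j; rewrite !mxE. Qed.

Lemma adjmx_mul m n p (A : 'M[C]_(m, n)) (B : 'M[C]_(n, p)) :
  adjmx (A *m B) = adjmx B *m adjmx A.
Proof. by rewrite !adjmxE trmx_mul map_mxM. Qed.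

Lemma adjmxK m n (A : 'M[C]_(m, n)) : adjmx (adjmx A) = A.
Proof. by apply/matrixP => i j; rewrite !mxE; exact: conjCK. Qed.

Lemma adjmx1 n : adjmx (1%:M : 'M[C]_n) = 1%:M.
Proof. by rewrite adjmxE trmx1 map_mx1. Qed.

Lemma adjmxD m n (A B : 'M[C]_(m, n)) : adjmx (A + B) = adjmx A + adjmx B.
Proof. by apply/matrixP => i j; rewrite !mxE rmorphD. Qed.

Lemma adjmxZ m n (c : C) (A : 'M[C]_(m, n)) : adjmx (c *: A) = Num.conj c *: adjmx A.
Proof. by apply/matrixP => i j; rewrite !mxE rmorphM. Qed.

Lemma adjmx_tens m n p q (A : 'M[C]_(m, n)) (B : 'M[C]_(p, q)) :
  adjmx (A *t B) = adjmx A *t adjmx B.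
Proof. by apply/matrixP => i j; rewrite !mxE rmorphM. Qed.

Definition Fac {n} (A : 'M[C]_n) := exists B : 'M[C]_n, A = B *m adjmx B.

Lemma Fac_tens m n (A : 'M[C]_m) (B : 'M[C]_n) : Fac A -> Fac B -> Fac (A *t B).
Proof.
move=> [X ->] [Y ->]; exists (X *t Y).
by rewrite adjmx_tens tensmx_mul.
Qed.

Lemma Fac_ntens n (A : 'M[C]_n) k : Fac A -> Fac (ntensmx A k).
Proof.
move=> FA; case: k => [|k].
  by rewrite ntensmx0; exists 1%:M; rewrite adjmx1 mulmx1.
elim: k => [|k IH]; first by rewrite ntensmx1.
by rewrite ntensmxSS; apply: Fac_tens.
Qed.

Lemma tr_tens m n (A : 'M[C]_m) (B : 'M[C]_n) : \tr (A *t B) = \tr A * \tr B.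
Proof.
rewrite /mxtrace mulr_sum; apply: eq_bigr => i _; by rewrite /tensmx mxE.
Qed.

Lemma tr_ntens n (A : 'M[C]_n) k : \tr (ntensmx A k) = \tr A ^+ k.
Proof.
case: k => [|k]; first by rewrite ntensmx0 mxtrace1 expr0.
elim: k => [|k IH]; first by rewrite ntensmx1 expr1.
rewrite ntensmxSS tr_tens exprS; congr (_ * _); exact: IH.
Qed.

Lemma diag_quad n (B T : 'M[C]_n) i :
  (adjmx B *m T *m B) i i = (adjmx (col i B) *m T *m col i B) 0 0.
Proof.
rewrite !mxE; apply: eq_bigr => k _; rewrite !mxE; congr (_ * _).
by apply: eq_bigr => l _; rewrite !mxE.
Qed.

Lemma Fac_tr_ge0 n (A T : 'M[C]_n) : Fac A -> psd T -> 0 <= trR (A *m T).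
Proof.
move=> [B ->] hT; rewrite /trR -mulmxA mxtrace_mulC.
apply: Re_ge0; rewrite /mxtrace; apply: sumr_ge0 => i _.
by rewrite diag_quad; apply: hT.
Qed.

End Mx.
Arguments Fac {R n}.

End SubE.
Import SubE.

Module SubF.
Local Open Scope ring_scope.

Section Spec.
Variable R : realType.
Local Notation C := R[i].

Lemma polar_C (a b x y : C) : 0 <= a -> 0 <= b -> 0 <= a + x + (y + b) ->
  0 <= a + 'i%C * x + (('i%C)^*%C * y + ('i%C)^*%C * ('i%C * b)) ->
  y = (x^*)%C.
Proof.
case: a => a1 a2; case: b => b1 b2; case: x => x1 x2; case: y => y1 y2.
rewrite /=; simpc => /andP[/eqP h1 h1'] /andP[/eqP h2 h2'] /andP[/eqP h3 h3'] /andP[/eqP h4 h4'].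
apply/eqP; rewrite eq_complex /=; apply/andP; split; apply/eqP; lra.
Qed.

Variable n : nat.
Implicit Types (A : 'M[C]_n) (u w : 'cV[C]_n).

Definition ff A u w := (adjmx u *m A *m w) 0 0.

Lemma ffDl A u u' w : ff A (u + u') w = ff A u w + ff A u' w.
Proof. by rewrite /ff adjmxD !mulmxDl mxE. Qed.

Lemma ffDr A u w w' : ff A u (w + w') = ff A u w + ff A u w'.
Proof. by rewrite /ff !mulmxDr mxE. Qed.

Lemma ffZl A c u w : ff A (c *: u) w = Num.conj c * ff A u w.
Proof. by rewrite /ff adjmxZ -!scalemxAl mxE. Qed.

Lemma ffZr A c u w : ff A u (c *: w) = c * ff A u w.
Proof. by rewrite /ff -!scalemxAr mxE. Qed.

Lemma adj_delta (i : 'I_n) : adjmx (delta_mx i 0 : 'cV[C]_n) = delta_mx 0 i.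
Proof.
apply/matrixP => a b; rewrite !mxE.
by rewrite andbC; case: (_ && _) => /=; [exact: (rmorph1 Num.conj) | exact: (rmorph0 Num.conj)].
Qed.

Lemma ff_delta A i j : ff A (delta_mx i 0) (delta_mx j 0) = A i j.
Proof. by rewrite /ff adj_delta -rowE -colE !mxE. Qed.

Lemma psd_herm A : psd A -> A \is hermsymmx.
Proof.
move=> hA; apply/is_hermitianmxP; rewrite expr0 scale1r.
apply/matrixP => i j; rewrite !mxE.
pose ei : 'cV[C]_n := delta_mx i 0; pose ej : 'cV[C]_n := delta_mx j 0.
have h1 : 0 <= ff A ej ej := hA ej.
have h2 : 0 <= ff A ei ei := hA ei.
have h3 : 0 <= ff A (ej + ei) (ej + ei) := hA _.
have h4 : 0 <= ff A (ej + 'i%C *: ei) (ej + 'i%C *: ei) := hA _.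
rewrite !ffDl !ffDr !ffZl !ffZr !ff_delta in h1 h2 h3 h4.
exact: (polar_C _ _ _ _ h1 h2 h3 h4).
Qed.

Lemma psd_Fac A : psd A -> Fac A.
Proof.
move=> hA.
have H := psd_herm _ hA.
have /orthomx_spectralP EA := hermitian_normalmx H.
have Pu : spectralmx A \is unitarymx by apply: spectral_unitarymx.
move: EA Pu; set P := spectralmx A; set D := spectral_diag A => EA Pu.
clearbody P D.
have PP : P *m adjmx P = 1%:M by rewrite adjmxE; apply/unitarymxP.
have iP : invmx P = adjmx P.
  by rewrite (invmx_unitary Pu); apply/matrixP => i j; rewrite !mxE.
have EA' : A = adjmx P *m diag_mx D *m P by rewrite -iP.
have D0 : forall j, 0 <= D 0 j.
  move=> j; have := hA (adjmx P *m delta_mx j 0).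
  rewrite adjmx_mul adjmxK adj_delta EA' !mulmxA.
  rewrite -(mulmxA (delta_mx 0 j) P) PP mulmx1 -(mulmxA _ P) PP mulmx1.
  by rewrite -rowE -colE !mxE eqxx mulr1n.
pose s : 'rV[C]_n := \row_j sqrtC (D 0 j).
have Ed : diag_mx s *m adjmx (diag_mx s) = diag_mx D.
  rewrite adjmxE tr_diag_mx map_diag_mx mulmx_diag.
  congr diag_mx; apply/rowP => j; rewrite !mxE.
  transitivity (sqrtC (D 0 j) * sqrtC (D 0 j)).
    by congr (_ * _); apply: geC0_conj; rewrite sqrtC_ge0.
  by rewrite -expr2 sqrtCK.
exists (adjmx P *m diag_mx s).
rewrite adjmx_mul adjmxK {1}EA' !mulmxA -(mulmxA (adjmx P) (diag_mx s)) Ed.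
by [].
Qed.

End Spec.

End SubF.
Import SubF.

Module SubG.
Local Open Scope ring_scope.
Local Open Scope classical_set_scope.

Set Implicit Arguments.
Unset Strict Implicit.
Arguments Fac_tr_ge0 {R n A T}.
Arguments Fac_ntens {R n A} k.
Arguments psd_Fac {R n A}.
Arguments tr_ntens {R n} A k.

Section G.
Variable R : realType.
Local Notation C := R[i].

Lemma trR_split m (P T : 'M[C]_m) : trR (P *m T) + trR (P *m (1%:M - T)) = trR P.
Proof.
rewrite /trR -ReD -mxtraceD -mulmxDr.
have -> : T + (1%:M - T) = 1%:M by rewrite addrC subrK.
by rewrite mulmx1. Qed.

Lemma psd0 m : psd (0 : 'M[C]_m).
Proof. by move=> v; rewrite mulmx0 mul0mx mxE. Qed.

Lemma psd1 m : psd (1%:M : 'M[C]_m).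
Proof.
move=> v; rewrite mulmx1 mxE; apply: sumr_ge0 => k _; rewrite mxE mulrC.
exact: mul_conjC_ge0.
Qed.

Definition cstK (alpha : R) := ln 8 / (1 - alpha) + (ln 2 / (1 - alpha) + ln 2).

Lemma cstK_ge0 alpha : alpha < 1 -> 0 <= cstK alpha.
Proof.
move=> a1; have hb : 0 <= (1 - alpha)^-1 by rewrite invr_ge0; lra.
have l8 : 0 <= ln (8 : R) by apply: ln_ge0; lra.
have l2 : 0 <= ln (2 : R) by apply: ln_ge0; lra.
rewrite /cstK; have := mulr_ge0 l8 hb; have := mulr_ge0 l2 hb; lra.
Qed.

Lemma per_mat alpha m (P S : 'M[C]_m) : Fac P -> Fac S -> trR P = 1 -> trR S = 1 ->
  0 < alpha -> alpha < 1 ->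
  (Dtest alpha P S <= - elog (errmin alpha P S) + (cstK alpha)%:E)%E /\
  (- elog (errmin alpha P S) <= Dtest alpha P S + (cstK alpha)%:E)%E.
Proof.
move=> FP FS TP TS a0 a1.
pose t := [set T : 'M[C]_m | is_test T].
pose P2 := fun T => trR (P *m (1%:M - T)).
pose Q1 := fun T : 'M[C]_m => trR (S *m T).
have eD : Dtest alpha P S = Dt R alpha _ t P2 Q1.
  rewrite /Dtest /Dt; congr (ereal_sup (image _ _)); apply/funext => T.
  rewrite /renyi_T /rT; congr renyi2.
  - by have := trR_split P T; rewrite TP /P2 => h; lra.
  - by have := trR_split S T; rewrite TS /Q1 => h; lra.
have eE : errmin alpha P S = mm R alpha _ t P2 Q1 by [].
have ht : forall T, t T -> (0 <= P2 T <= 1) /\ (0 <= Q1 T <= 1).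
  move=> T [h1 h2].
  have g1 := Fac_tr_ge0 FP h1; have g2 := Fac_tr_ge0 FP h2.
  have g3 := Fac_tr_ge0 FS h1; have g4 := Fac_tr_ge0 FS h2.
  have := trR_split P T; have := trR_split S T; rewrite TP TS /P2 /Q1 => e1 e2.
  split; apply/andP; split; lra.
have hf : forall T, t T -> [/\ t (1%:M - T), P2 (1%:M - T) = 1 - P2 T & Q1 (1%:M - T) = 1 - Q1 T].
  move=> T [h1 h2]; split.
  - by split; rewrite ?subKr.
  - by rewrite /P2 subKr; have := trR_split P T; rewrite TP => h; lra.
  - by rewrite /Q1; have := trR_split S T; rewrite TS => h; lra.
have t0 : t 0 by split; [exact: psd0 | rewrite subr0; exact: psd1].
have U := @Dt_upper R alpha _ t P2 Q1 _ ht hf 0 t0 a0 a1.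
have L := @Dt_lower R alpha _ t P2 Q1 ht 0 t0 a0 a1.
have hb : 0 <= (1 - alpha)^-1 by rewrite invr_ge0; lra.
have l8 : 0 <= ln (8 : R) by apply: ln_ge0; lra.
have l2 : 0 <= ln (2 : R) by apply: ln_ge0; lra.
have p8 := mulr_ge0 l8 hb; have p2 := mulr_ge0 l2 hb.
rewrite eD eE; split.
- apply: le_trans U _; apply: leeD => //; rewrite lee_fin /cstK; lra.
- apply: le_trans L _; apply: leeD => //; rewrite lee_fin /cstK; lra.
Qed.

End G.

Lemma scale_ineq (R : realType) (r c : R) (x y : \bar R) : 0 <= r ->
  (x <= y + c%:E)%E -> (r%:E * x <= r%:E * y + (c * r)%:E)%E.
Proof.
move=> r0 h; apply: le_trans (lee_wpmul2l _ h) _; first by rewrite lee_fin.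
rewrite muleDr //; last first.   exact: fin_num_adde_defl.
by rewrite -EFinM mulrC.
Qed.


End SubG.
Import SubG.

Unset Implicit Arguments.

Theorem mainTheorem7 (R : realType) (d : nat) (rho sigma : 'M[R[i]]_d)
    (alpha : R) :
  density rho -> density sigma -> 0 < alpha < 1 ->
  limn_esup (lhs_seq alpha rho sigma) = limn_esup (rhs_seq alpha rho sigma) /\
  limn_einf (lhs_seq alpha rho sigma) = limn_einf (rhs_seq alpha rho sigma).
Proof.
move=> [hr1 hr2] [hs1 hs2] /andP[a0 a1].
have FP n : Fac (tpow rho n) := Fac_ntens n (psd_Fac hr1).
have FS n : Fac (tpow sigma n) := Fac_ntens n (psd_Fac hs1).
have TP n : trR (tpow rho n) = 1 by rewrite /trR /tpow tr_ntens hr2 expr1n.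
have TS n : trR (tpow sigma n) = 1 by rewrite /trR /tpow tr_ntens hs2 expr1n.
have c0 := cstK_ge0 a1.
have key n : (0 < n)%N ->
  (lhs_seq alpha rho sigma n <= rhs_seq alpha rho sigma n + (cstK alpha / n%:R)%:E)%E /\
  (rhs_seq alpha rho sigma n <= lhs_seq alpha rho sigma n + (cstK alpha / n%:R)%:E)%E.
  move=> n0; have [U L] := per_mat (FP n) (FS n) (TP n) (TS n) a0 a1.
  have ni : 0 <= n%:R^-1 :> R by rewrite invr_ge0.
  rewrite /lhs_seq /rhs_seq -muleN; split.
  - exact: scale_ineq ni U.
  - exact: scale_ineq ni L.
have [H1 H2] := @lim_compare R _ _ _ c0 (fun n h => (key n h).1).
have [H3 H4] := @lim_compare R _ _ _ c0 (fun n h => (key n h).2).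
by split; apply/le_anti/andP.
Qed.
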